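(* Let $\mathcal{H}$ be a Hilbert space, $f,g\colon\mathcal{H}\to\mathbb{R}$ convex continuous, $\mathcal{C}_f=\arg\min f\neq\emptyset$, $f_\ast=\min f$, $r>0$ and $\mathcal{U}_r:=\{x: d(x,\mathcal{C}_f)\le r\}$. Then for every $x\in\mathcal{U}_r$ and every $\delta>0$, $$g(x)-f(x)\;\le\;\big(\|s_g-s_f|_{\mathcal{U}_r}+\delta\big)\,d(x,\mathcal{C}_f)\;+\;\frac{\|s_g-s_f|_{\mathcal{U}_r}}{\delta}\,\big(f(x)-f_\ast\big)\;+\;\|g-f|_{\mathcal{C}_f}.$$
   Context: $\partial f(x)=\{v: f(y)-f(x)\ge\langle v,y-x\rangle\ \forall y\}$ is the convex subdifferential and $s_f(x):=\operatorname{dist}(0,\partial f(x))$ the slope (similarly for $g$). For $\omega\colon\mathcal{H}\to\mathbb{R}$ and $\mathcal{U}\subset\mathcal{H}$, $\|\omega|_{\mathcal{U}}:=\sup_{x\in\mathcal{U}}\max\{\omega(x),0\}$. *)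

(* Defs.v *)
From HB Require Import structures.
From mathcomp Require Import all_boot all_order all_algebra.
From mathcomp Require Import all_classical all_reals all_analysis.
Set Implicit Arguments. Unset Strict Implicit. Unset Printing Implicit Defensive.
Import Order.TTheory GRing.Theory Num.Theory.
Import numFieldNormedType.Exports.
Local Open Scope classical_set_scope.
Local Open Scope ring_scope.

Definition hilbert_inner (R : realType) (H : completeNormedModType R)
    (ip : H -> H -> R) : Prop :=
  [/\ (forall x y, ip x y = ip y x),
      (forall x y z, ip (x + y) z = ip x z + ip y z),
      (forall (a : R) x y, ip (a *: x) y = a * ip x y) &
      (forall x, ip x x = `|x| ^+ 2)].

Definition convex_fun (R : realType) (H : completeNormedModType R)
    (f : H -> R) : Prop :=
  forall (t : R) x y, 0 <= t -> t <= 1 ->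
    f (t *: x + (1 - t) *: y) <= t * f x + (1 - t) * f y.

Definition argmin (R : realType) (H : completeNormedModType R) (f : H -> R)
  : set H := [set x | forall y, f x <= f y].

Definition fmin (R : realType) (H : completeNormedModType R) (f : H -> R)
  : \bar R := ereal_inf [set (f x)%:E | x in [set: H]].

Definition dist_set (R : realType) (H : completeNormedModType R)
    (x : H) (C : set H) : \bar R :=
  ereal_inf [set (`|x - c|)%:E | c in C].

Definition subdiff (R : realType) (H : completeNormedModType R)
    (ip : H -> H -> R) (f : H -> R) (x : H) : set H :=
  [set v | forall y, ip v (y - x) <= f y - f x].

Definition slope (R : realType) (H : completeNormedModType R)
    (ip : H -> H -> R) (f : H -> R) (x : H) : \bar R :=
  dist_set 0 (subdiff ip f x).

Definition pos_sup (R : realType) (H : completeNormedModType R)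
    (w : H -> \bar R) (U : set H) : \bar R :=
  ereal_sup [set maxe (w x) 0%E | x in U].

(* Main.v *)
Require Import Defs.
From HB Require Import structures.
From mathcomp Require Import all_boot all_order all_algebra.
From mathcomp Require Import all_classical all_reals all_analysis.
From mathcomp Require Import ring lra.
Import Order.TTheory GRing.Theory Num.Theory.
Import numFieldNormedType.Exports.
Local Open Scope classical_set_scope.
Local Open Scope ring_scope.
Lemma ipDr {R : realType} {H : completeNormedModType R} {ip : H -> H -> R} :
  hilbert_inner ip -> forall x y z, ip x (y + z) = ip x y + ip x z.
Proof. by case=> s a _ _ x y z; rewrite s a !(s x). Qed.

Lemma ipZr {R : realType} {H : completeNormedModType R} {ip : H -> H -> R} :
  hilbert_inner ip -> forall (a : R) x y, ip x (a *: y) = a * ip x y.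
Proof. by case=> s _ z _ a x y; rewrite s z s. Qed.

Lemma ipNl {R : realType} {H : completeNormedModType R} {ip : H -> H -> R} :
  hilbert_inner ip -> forall x y, ip (- x) y = - ip x y.
Proof. by case=> _ _ z _ x y; rewrite -scaleN1r z mulN1r. Qed.

Lemma ipNr {R : realType} {H : completeNormedModType R} {ip : H -> H -> R} :
  hilbert_inner ip -> forall x y, ip x (- y) = - ip x y.
Proof. move=> hip x y; case: (hip) => s _ _ _; by rewrite s (ipNl hip) s. Qed.

Lemma ipBl {R : realType} {H : completeNormedModType R} {ip : H -> H -> R} :
  hilbert_inner ip -> forall x y z, ip (x - y) z = ip x z - ip y z.
Proof. move=> hip x y z; case: (hip) => _ a _ _; by rewrite a (ipNl hip). Qed.

Lemma ipBr {R : realType} {H : completeNormedModType R} {ip : H -> H -> R} :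
  hilbert_inner ip -> forall x y z, ip x (y - z) = ip x y - ip x z.
Proof. move=> hip x y z; by rewrite (ipDr hip) (ipNr hip). Qed.

Lemma normD2 {R : realType} {H : completeNormedModType R} {ip : H -> H -> R} :
  hilbert_inner ip -> forall x y : H,
  `|x + y| ^+ 2 = `|x| ^+ 2 + `|y| ^+ 2 + 2 * ip x y.
Proof.
move=> hip x y; case: (hip) => s a _ n.
rewrite -[`|x+y|^+2]n -[`|x|^+2]n -[`|y|^+2]n a !(ipDr hip) (s y x).
ring.
Qed.

Lemma normB2 {R : realType} {H : completeNormedModType R} {ip : H -> H -> R} :
  hilbert_inner ip -> forall x y : H,
  `|x - y| ^+ 2 = `|x| ^+ 2 + `|y| ^+ 2 - 2 * ip x y.
Proof.
move=> hip x y; rewrite (normD2 hip) normrN (ipNr hip). ring.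
Qed.

Lemma CS {R : realType} {H : completeNormedModType R} {ip : H -> H -> R} :
  hilbert_inner ip -> forall x y : H, ip x y <= `|x| * `|y|.
Proof.
move=> hip x y.
have [->|x0] := eqVneq x 0.
  by case: (hip) => _ _ z _; have := z 0 0 y; rewrite scale0r mul0r => ->; rewrite normr0 mul0r.
have [->|y0] := eqVneq y 0.
  by have := ipZr hip 0 x 0; rewrite scale0r mul0r => ->; rewrite normr0 mulr0.
have nx : 0 < `|x| by rewrite normr_gt0.
have ny : 0 < `|y| by rewrite normr_gt0.
have := sqr_ge0 (Num.norm (`|y| *: x - `|x| *: y)).
rewrite (normB2 hip) !normrZ (ger0_norm (ltW nx)) (ger0_norm (ltW ny)).
rewrite (ipZr hip); case: (hip) => _ _ z _; rewrite z => h.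
have hab : 0 < `|x| * `|y| by apply: mulr_gt0.
nra.
Qed.

Lemma mid_eq {R : realType} {H : completeNormedModType R} (a b : H) :
  (2:R)^-1 *: a + (1 - (2:R)^-1) *: b = (2:R)^-1 *: (a + b).
Proof.
have -> : 1 - (2:R)^-1 = 2^-1 by field.
by rewrite scalerDr.
Qed.

Lemma mid_sub {R : realType} {H : completeNormedModType R} (a b y : H) :
  (2:R)^-1 *: (a + b) - y = (2:R)^-1 *: (a - y) + (2:R)^-1 *: (b - y).
Proof.
rewrite -scalerDr addrACA -opprD scalerBr; congr (_ - _).
rewrite -mulr2n -[y *+ 2]scaler_nat scalerA mulVf ?scale1r // pnatr_eq0.
Qed.

Lemma half_norm2 {R : realType} {H : completeNormedModType R} (a : H) :
  `|(2:R)^-1 *: a| ^+ 2 = `|a| ^+ 2 / 4.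
Proof.
rewrite normrZ ger0_norm ?invr_ge0 ?ler0n // exprMn.
have -> : ((2:R)^-1) ^+ 2 = 4^-1 by rewrite expr2 -invfM; congr (_^-1); rewrite -natrM.
by rewrite mulrC.
Qed.

Lemma prox_cauchy_key {R : realType} {H : completeNormedModType R} {ip : H -> H -> R}
  {f : H -> R} {y : H} {tau m : R} :
  hilbert_inner ip -> convex_fun f -> 0 < tau ->
  (forall z, m <= tau * f z + `|z - y| ^+ 2 / 2) ->
  forall a b ea eb,
  tau * f a + `|a - y| ^+ 2 / 2 <= m + ea ->
  tau * f b + `|b - y| ^+ 2 / 2 <= m + eb ->
  `|a - b| ^+ 2 <= 4 * (ea + eb).
Proof.
move=> hip cf tau0 hm a b ea eb ha hb.
have hc := cf (2:R)^-1 a b.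
rewrite mid_eq in hc.
have hm' := hm ((2:R)^-1 *: (a + b)).
rewrite mid_sub (normD2 hip) !half_norm2 (ipZr hip) in hm'.
case: (hip) => _ _ z _; rewrite z in hm'.
have e1 : (a - b) = (a - y) - (b - y).
  by rewrite opprB addrA subrK.
have e2 := normB2 hip (a - y) (b - y); rewrite -e1 in e2.
have hc' : f (2^-1 *: (a + b)) <= 2^-1 * f a + (1 - 2^-1) * f b.
  by apply: hc; rewrite ?invr_ge0 ?ler0n // invf_le1 ?ler1n.
have ht : tau * f (2^-1 *: (a + b)) <= tau * (2^-1 * f a + (1 - 2^-1) * f b).
  by rewrite ler_pM2l.
rewrite e2.
nra.
Qed.

Lemma prox_min {R : realType} {H : completeNormedModType R} {ip : H -> H -> R}
  (f : H -> R) (y : H) (tau fs : R) :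
  hilbert_inner ip -> convex_fun f -> continuous f -> 0 < tau ->
  (forall z, fs <= f z) ->
  exists z, forall w, tau * f z + `|z - y| ^+ 2 / 2 <= tau * f w + `|w - y| ^+ 2 / 2.
Proof.
move=> hip cf contf tau0 hfs.
pose hh w := tau * f w + `|w - y| ^+ 2 / 2.
pose E := range hh.
have lbE : has_lbound E.
  exists (tau * fs) => _ [w _ <-]; rewrite /hh.
  have : tau * fs <= tau * f w by rewrite ler_pM2l.
  have : 0 <= `|w - y| ^+ 2 / 2 by rewrite divr_ge0 ?sqr_ge0.
  move=> ? ?; lra.
have infE : has_inf E by split => //; exists (hh y), y.
pose m := inf E.
have hm : forall w, m <= hh w by move=> w; apply: ge_inf => //; exists w.
have /choice [zs hzs] : forall n : nat, exists z, hh z < m + n.+1%:R^-1.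
  move=> n; have en : 0 < n.+1%:R^-1 :> R by rewrite invr_gt0 ltr0Sn.
  have [_ [z _ <-] hz] := inf_adherent en infE.
  by exists z.
have key : forall a b : nat, `|zs a - zs b| ^+ 2 <= 4 * (a.+1%:R^-1 + b.+1%:R^-1).
  move=> a b; exact: (prox_cauchy_key hip cf tau0 hm _ _ _ _ (ltW (hzs a)) (ltW (hzs b))).
have zc : cvg (zs @ \oo).
  apply/cauchy_cvgP; apply: cauchy_exP => eps eps0.
  have e0 : 0 <= 8 / eps ^+ 2 by rewrite divr_ge0 ?sqr_ge0.
  have hN := archi_boundP e0; set N := Num.bound _ in hN.
  exists (zs N); exists N => // n /= hn.
  rewrite -ball_normE /=.
  have k := key N n.
  have h1 : n.+1%:R^-1 <= N.+1%:R^-1 :> R.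
    by rewrite lef_pV2 ?posrE ?ltr0Sn // ler_nat.
  have h2 : 8 / eps ^+ 2 < N.+1%:R :> R.
    by apply: (lt_le_trans hN); rewrite ler_nat.
  have h3 : 8 * N.+1%:R^-1 < eps ^+ 2 :> R.
    rewrite ltr_pdivrMr ?exprn_gt0 // in h2.
    by rewrite ltr_pdivrMr ?ltr0Sn // mulrC.
  have hn0 := normr_ge0 (zs N - zs n).
  move: k h1 h3; set A := N.+1%:R^-1; set B := n.+1%:R^-1; set D := `|zs N - zs n| ^+ 2 => k h1 h3.
  have hsq : D < eps ^+ 2 by lra.
  rewrite /D in hsq.
  rewrite !expr2 in hsq; nra.
set z := lim _ in zc.
exists z => w.
suff : hh z <= m by move/le_trans; apply; exact: hm.
apply/ler_addgt0Pr => e e0.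
have hcv : (fun n => hh (zs n)) @ \oo --> hh z.
  have hf : (f \o zs) @ \oo --> f z by apply: continuous_cvg; [exact: contf | exact: zc].
  have hn : (fun n => `|zs n - y|) @ \oo --> `|z - y|.
    by apply: cvg_norm; apply: cvgB => //; exact: cvg_cst.
  have -> : (fun n => hh (zs n)) = (fun n => tau * (f \o zs) n + `|zs n - y| * `|zs n - y| / 2).
    by apply: funext => n; rewrite /hh expr2.
  rewrite /hh expr2.
  apply: cvgD; first exact: cvgMl_tmp.
  apply: cvgMr_tmp; exact: cvgM.
have hcl := @closed_cvg _ _ \oo _ (fun n => hh (zs n)) _ (closed_le (y := m + e)).
suff hA : \forall n \near \oo, hh (zs n) <= m + e by exact: (hcl _ hA (hh z) hcv).
have e0' : 0 <= e^-1 by rewrite invr_ge0 ltW.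
have hN := archi_boundP e0'; set N := Num.bound _ in hN.
exists N => // n /= hn.
apply: (le_trans (ltW (hzs n))); rewrite lerD2l.
rewrite -[e in X in _ <= X]invrK lef_pV2 ?posrE ?invr_gt0 ?ltr0Sn //.
by apply: (le_trans (ltW hN)); rewrite ler_nat ltnW.
Qed.

Lemma prox_exists {R : realType} {H : completeNormedModType R} {ip : H -> H -> R}
  (f : H -> R) (y : H) (tau fs : R) :
  hilbert_inner ip -> convex_fun f -> continuous f -> 0 < tau ->
  (forall z, fs <= f z) ->
  exists z, forall w, ip (y - z) (w - z) <= tau * (f w - f z).
Proof.
move=> hip cf contf tau0 hfs.
have [z hz] := prox_min f y tau fs hip cf contf tau0 hfs.
exists z => w.
apply/ler_addgt0Pr => e e0.
set K := `|w - z| ^+ 2 / 2.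
have K0 : 0 <= K by rewrite /K divr_ge0 ?sqr_ge0.
set t := e / (e + K).
have eK : 0 < e + K by lra.
have t0 : 0 < t by rewrite /t divr_gt0.
have t1 : t <= 1 by rewrite /t ler_pdivrMr // mul1r; lra.
have tK : t * K <= e.
  rewrite /t mulrAC ler_pdivrMr //; nra.
have hzt := hz (t *: w + (1 - t) *: z).
have ev : t *: w + (1 - t) *: z - y = (z - y) + t *: (w - z).
  by rewrite scalerBl scale1r scalerBr addrCA addrAC.
rewrite ev (normD2 hip (z - y)) normrZ (ger0_norm (ltW t0)) (ipZr hip) in hzt.
have hc := cf t w z (ltW t0) t1.
have hc' : tau * f (t *: w + (1 - t) *: z) <= tau * (t * f w + (1 - t) * f z).
  by rewrite ler_pM2l.
have hn : ip (y - z) (w - z) = - ip (z - y) (w - z).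
  by rewrite -(ipNl hip) opprB.
rewrite hn.
have hK : `|w - z| ^+ 2 = 2 * K by rewrite /K; field.
rewrite exprMn hK in hzt.
nra.
Qed.

Lemma prox_step {R : realType} {H : completeNormedModType R} {ip : H -> H -> R}
  (f : H -> R) (y : H) (tau fs : R) :
  hilbert_inner ip -> convex_fun f -> continuous f -> 0 < tau ->
  (forall z, fs <= f z) ->
  exists z, [/\ subdiff ip f z (tau^-1 *: (y - z)),
    `|y - z| ^+ 2 <= tau * (f y - f z) &
    (forall c, argmin f c -> `|z - c| <= `|y - c|)].
Proof.
move=> hip cf contf tau0 hfs.
have [z hz] := prox_exists f y tau fs hip cf contf tau0 hfs.
exists z; split.
- move=> w /=; case: (hip) => _ _ zl _; rewrite zl.
  by rewrite -(ler_pM2l tau0) mulrA mulfV ?mul1r ?gt_eqF //; exact: hz.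
- by have := hz y; case: (hip) => _ _ _ n; rewrite n.
- move=> c hc.
  have h1 := hz c.
  have h2 : f c <= f z by apply: hc.
  have e : y - c = (y - z) + (z - c) by rewrite addrA subrK.
  have h3 := normD2 hip (y - z) (z - c); rewrite -e in h3.
  have h4 : ip (y - z) (z - c) = - ip (y - z) (c - z).
    by rewrite -(ipNr hip) opprB.
  have h5 : `|z - c| ^+ 2 <= `|y - c| ^+ 2.
    have := sqr_ge0 `|y - z|; nra.
  by rewrite -(ler_pXn2r (n:=2)) ?nnegrE ?normr_ge0.
Qed.

Lemma final_jump {R : realType} {H : completeNormedModType R} {ip : H -> H -> R}
  (f g : H -> R) (x z u : H) (Tr Sr eps delta d0 : R) :
  hilbert_inner ip ->
  (forall c, argmin f c -> g c - f c <= Tr) ->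
  (forall y, (forall c, argmin f c -> `|y - c| <= `|x - c|) ->
     forall u, subdiff ip f y u -> forall e, 0 < e ->
     exists v, subdiff ip g y v /\ `|v| <= `|u| + Sr + e) ->
  (forall eta, 0 < eta -> exists c, argmin f c /\ `|x - c| < d0 + eta) ->
  0 < eps -> 0 <= Sr -> 0 < delta ->
  (forall c, argmin f c -> `|z - c| <= `|x - c|) ->
  subdiff ip f z u -> `|u| <= delta ->
  g z - f z <= Tr + (delta + Sr + eps) * d0.
Proof.
move=> hip hT hS hd eps0 Sr0 d0' Pz hu ud.
apply/ler_addgt0Pr => eta eta0.
set K := delta + Sr + eps.
have K0 : 0 < K by rewrite /K; lra.
have [v [hv vb]] := hS z Pz u hu eps eps0.
have vK : `|v| <= K by rewrite /K; lra.
have [c [hc xc]] := hd (eta / K) (divr_gt0 eta0 K0).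
have h1 := hv c.
have h2 : ip v (z - c) <= `|v| * `|z - c| := CS hip v (z - c).
have h3 : ip v (c - z) = - ip v (z - c) by rewrite -(ipNr hip) opprB.
have h4 : f c <= f z by apply: hc.
have h5 := hT c hc.
have h6 := Pz c hc.
have h7 : `|v| * `|z - c| <= K * `|x - c|.
  apply: ler_pM => //; exact: normr_ge0.
have h8 : K * `|x - c| <= K * d0 + eta.
  have : K * `|x - c| <= K * (d0 + eta / K) by rewrite ler_pM2l // ltW.
  by rewrite mulrDr mulrCA mulfV ?gt_eqF // mulr1.
lra.
Qed.

Lemma chain {R : realType} {H : completeNormedModType R} {ip : H -> H -> R}
  (f g : H -> R) (x : H) (Tr Sr eps delta d0 fs tau : R) :
  hilbert_inner ip -> convex_fun f -> continuous f ->
  (forall z, fs <= f z) -> 0 < tau ->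
  (forall c, argmin f c -> g c - f c <= Tr) ->
  (forall y, (forall c, argmin f c -> `|y - c| <= `|x - c|) ->
     forall u, subdiff ip f y u -> forall e, 0 < e ->
     exists v, subdiff ip g y v /\ `|v| <= `|u| + Sr + e) ->
  (forall eta, 0 < eta -> exists c, argmin f c /\ `|x - c| < d0 + eta) ->
  0 < eps -> 0 <= Sr -> 0 < delta ->
  forall n : nat, forall y u,
  (forall c, argmin f c -> `|y - c| <= `|x - c|) ->
  subdiff ip f y u -> f y - fs < n%:R * (tau * delta ^+ 2) ->
  g y - f y <= Tr + (delta + Sr + eps) * d0 + (Sr + eps) / delta * (f y - fs)
     + (Sr + eps) * tau * delta + tau * `|u| ^+ 2 / 2.
Proof.
move=> hip cf contf hfs tau0 hT hS hd eps0 Sr0 d0'.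
elim=> [|n IH] y u Py hu hn.
  by have := hfs y; rewrite mul0r in hn; lra.
have [z [hsub hdesc hnon]] := prox_step f y tau fs hip cf contf tau0 hfs.
set u' := tau^-1 *: (y - z) in hsub.
have Pz : forall c, argmin f c -> `|z - c| <= `|x - c|.
  by move=> c hc; apply: le_trans (hnon c hc) (Py c hc).
have [v [hv vb]] := hS y Py u hu eps eps0.
have h1 := hv z.
have h2 : ip v (y - z) <= `|v| * `|y - z| := CS hip v (y - z).
have h3 : ip v (z - y) = - ip v (y - z) by rewrite -(ipNr hip) opprB.
set p := `|y - z| in h2 hdesc.
set b := tau^-1 * p.
have hub : `|u'| = b by rewrite /u' normrZ ger0_norm // invr_ge0 ltW.
have hp : p = tau * b by rewrite /b mulrA mulfV ?gt_eqF // mul1r.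
have b0 : 0 <= b by apply: mulr_ge0; [rewrite invr_ge0 ltW | exact: normr_ge0].
have hdesc' : tau * b ^+ 2 <= f y - f z.
  rewrite hp exprMn expr2 -mulrA in hdesc.
  by rewrite -(ler_pM2l tau0) expr2.
set a := `|u|.
have a0 : 0 <= a by exact: normr_ge0.
have hg : g y - g z <= (a + Sr + eps) * (tau * b).
  have : `|v| * p <= (a + Sr + eps) * p by apply: ler_wpM2r => //; exact: normr_ge0.
  rewrite -hp; lra.
have Lge : 0 <= (Sr + eps) / delta by rewrite divr_ge0 // ?ltW //; lra.
have fyfs : 0 <= f y - fs by have := hfs y; lra.
have am : tau * (a * b - b ^+ 2) <= tau * (a ^+ 2 / 2).
  rewrite ler_pM2l //; nra.
case: (leP b delta) => bd.
- have hf := final_jump f g x z u' Tr Sr eps delta d0 hip hT hS hd eps0 Sr0 d0' Pz hsub.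
  rewrite hub in hf; have {hf} hf := hf bd.
  have e1 : (Sr + eps) * (tau * b) <= (Sr + eps) * tau * delta.
    by rewrite -mulrA ler_pM2l ?ler_pM2l //; lra.
  have e2 : 0 <= (Sr + eps) / delta * (f y - fs) by apply: mulr_ge0.
  lra.
- have hz : f z - fs < n%:R * (tau * delta ^+ 2).
  have : tau * delta ^+ 2 < tau * b ^+ 2.
    by rewrite ltr_pM2l // ltr_pXn2r // ?nnegrE ltW.
  move: hn; rewrite -natr1 mulrDl mul1r; lra.
  have := IH z u' Pz hsub hz; rewrite hub => ih.
  have e1 : (Sr + eps) * (tau * b) <= (Sr + eps) / delta * (tau * b ^+ 2).
    have : (Sr + eps) <= (Sr + eps) / delta * b.
      rewrite mulrAC ler_pdivlMr //; rewrite ler_pM2l; [exact: ltW|lra].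
    move=> h.
    have tb0 : 0 <= tau * b by apply: mulr_ge0 => //; exact: ltW.
    have -> : (Sr + eps) / delta * (tau * b ^+ 2) = (Sr + eps) / delta * b * (tau * b) by ring.
    exact: ler_wpM2r.
  have e2 : (Sr + eps) / delta * (tau * b ^+ 2) <= (Sr + eps) / delta * (f y - f z).
    by apply: ler_wpM2l.
  have am2 : tau * (a * b - b ^+ 2 / 2) <= tau * (a ^+ 2 / 2).
    rewrite ler_pM2l //; have := sqr_ge0 (a - b); rewrite !expr2; nra.
  lra.
Qed.

Lemma core {R : realType} {H : completeNormedModType R} {ip : H -> H -> R}
  (f g : H -> R) (x : H) (Tr Sr delta d0 fs : R) :
  hilbert_inner ip -> convex_fun f -> continuous f -> continuous g ->
  (forall z, fs <= f z) ->
  (forall c, argmin f c -> g c - f c <= Tr) ->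
  (forall y, (forall c, argmin f c -> `|y - c| <= `|x - c|) ->
     forall u, subdiff ip f y u -> forall e, 0 < e ->
     exists v, subdiff ip g y v /\ `|v| <= `|u| + Sr + e) ->
  (forall eta, 0 < eta -> exists c, argmin f c /\ `|x - c| < d0 + eta) ->
  0 <= d0 -> 0 <= Sr -> 0 < delta ->
  g x - f x <= (Sr + delta) * d0 + Sr / delta * (f x - fs) + Tr.
Proof.
move=> hip cf contf contg hfs hT hS hd d00 Sr0 de0.
apply/ler_addgt0Pr => e e0.
set M := f x - fs.
have M0 : 0 <= M by have := hfs x; rewrite /M; lra.
set Q := d0 + M / delta + 1.
have Q0 : 0 < Q by rewrite /Q; have := divr_ge0 M0 (ltW de0); lra.
set eps := e / (3 * Q).
have eps0 : 0 < eps by rewrite /eps divr_gt0 // mulr_gt0.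
have epsQ : eps * (d0 + M / delta) <= e / 3.
  have : eps * Q = e / 3 by rewrite /eps invfM mulrA -mulrA mulVf ?gt_eqF // mulr1.
  have : 0 <= eps by exact: ltW.
  rewrite /Q; nra.
have [rho rho0 hrho] : exists2 rho, 0 < rho & forall z, `|x - z| < rho -> `|g x - g z| < e / 3.
  have := contg x; move/cvgrPdist_lt => /(_ (e / 3)) h.
  have e3 : 0 < e / 3 by rewrite divr_gt0.
  have {h} /nbhs_ballP [rho rho0 hb] := h e3.
  exists rho => // z hz; apply: hb; rewrite -ball_normE /=; exact: hz.
set W := (Sr + eps) * delta + 1.
have W0 : 0 < W by rewrite /W; have := mulr_ge0 (addr_ge0 Sr0 (ltW eps0)) (ltW de0); lra.
set tau := Num.min (rho ^+ 2 / (M + 1)) (e / (3 * W)).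
have t1 : 0 < rho ^+ 2 / (M + 1) by rewrite divr_gt0 ?exprn_gt0 //; lra.
have t2 : 0 < e / (3 * W) by rewrite divr_gt0 ?mulr_gt0.
have tau0 : 0 < tau by rewrite /tau lt_min t1 t2.
have tau1 : tau <= rho ^+ 2 / (M + 1) by rewrite /tau ge_min lexx.
have tau2 : tau <= e / (3 * W) by rewrite /tau ge_min lexx orbT.
have [y1 [hsub hdesc hnon]] := prox_step f x tau fs hip cf contf tau0 hfs.
set u1 := tau^-1 *: (x - y1) in hsub.
set p := `|x - y1| in hdesc.
have p0 : 0 <= p by exact: normr_ge0.
have fy1 := hfs y1.
have hpM : p ^+ 2 < rho ^+ 2.
  have : tau * (f x - f y1) <= tau * M by rewrite ler_pM2l // /M; lra.
  have : tau * M <= rho ^+ 2 / (M + 1) * M by apply: ler_wpM2r.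
  have : rho ^+ 2 / (M + 1) * M < rho ^+ 2.
    rewrite mulrAC ltr_pdivrMr; last by lra.
    by rewrite ltr_pM2l ?exprn_gt0 //; lra.
  lra.
have prho : p < rho.
  by move: hpM; rewrite ltr_pXn2r // ?nnegrE // ltW.
have hgx := hrho y1 prho.
have hgx' : g x - g y1 < e / 3 by move: hgx; rewrite ltr_norml => /andP[_ ->].
have Py1 : forall c, argmin f c -> `|y1 - c| <= `|x - c| by [].
have hu1 : tau * `|u1| ^+ 2 = p ^+ 2 / tau.
  rewrite /u1 normrZ ger0_norm ?invr_ge0 ?ltW // exprMn.
  by rewrite -/p; field; rewrite gt_eqF.
have hdesc' : p ^+ 2 / tau <= f x - f y1 by rewrite ler_pdivrMr // mulrC.
have de2 : 0 < tau * delta ^+ 2 by rewrite mulr_gt0 ?exprn_gt0.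
have [N hN] : exists N : nat, f y1 - fs < N%:R * (tau * delta ^+ 2).
  have q0 : 0 <= (f y1 - fs) / (tau * delta ^+ 2) by apply: divr_ge0; [lra | exact: ltW].
  exists (Num.bound ((f y1 - fs) / (tau * delta ^+ 2))).
  by rewrite -ltr_pdivrMr //; exact: archi_boundP.
have ch := chain f g x Tr Sr eps delta d0 fs tau hip cf contf hfs tau0 hT hS hd eps0 Sr0 de0 N y1 u1 Py1 hsub hN.
have L0 : 0 <= (Sr + eps) / delta by apply: divr_ge0; [lra | exact: ltW].
have hL : (Sr + eps) / delta * (f y1 - fs) <= (Sr + eps) / delta * M.
  apply: ler_wpM2l => //; rewrite /M; have := divr_ge0 (sqr_ge0 p) (ltW tau0); lra.
have hLM : (Sr + eps) / delta * M = Sr / delta * M + eps * (M / delta).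
  by rewrite /M; field; rewrite gt_eqF.
have hK : (delta + Sr + eps) * d0 = (Sr + delta) * d0 + eps * d0 by ring.
have hW : (Sr + eps) * tau * delta <= e / 3.
  have : (Sr + eps) * tau * delta <= tau * W.
    rewrite /W mulrAC -mulrA; have := mulr_ge0 (addr_ge0 Sr0 (ltW eps0)) (ltW de0).
    have : tau * ((Sr + eps) * delta) <= tau * ((Sr + eps) * delta + 1).
      by rewrite ler_pM2l //; lra.
    move=> h _; apply: le_trans h; rewrite mulrA (mulrC tau) -mulrA; exact: lexx.
  have : tau * W <= e / 3.
    have eW : e / (3 * W) * W = e / 3 by field; rewrite (gt_eqF W0).
    by rewrite -eW; apply: ler_wpM2r => //; exact: ltW.
  lra.
rewrite hu1 hK in ch; rewrite mulrDr in epsQ.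
have := divr_ge0 (sqr_ge0 p) (ltW tau0).
rewrite /M in hL hLM epsQ *.
lra.
Qed.

Lemma dist_mono {R : realType} {H : completeNormedModType R} (C : set H) (x y : H) :
  (forall c, C c -> `|y - c| <= `|x - c|) -> (dist_set y C <= dist_set x C)%E.
Proof.
move=> h; apply: le_ereal_inf_tmp => _ [c hc <-].
apply: (@le_trans _ _ (`|y - c|)%:E); last by rewrite lee_fin h.
by apply: ereal_inf_lbound; exists c.
Qed.

Lemma dist_fin {R : realType} {H : completeNormedModType R} (C : set H) (x c0 : H) :
  C c0 -> exists d0, [/\ dist_set x C = d0%:E, 0 <= d0, d0 <= `|x - c0| &
    forall eta, 0 < eta -> exists c, C c /\ `|x - c| < d0 + eta].
Proof.
move=> hc0.
have lb : (0 <= dist_set x C)%E.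
  by apply: le_ereal_inf_tmp => _ [c hc <-]; rewrite lee_fin normr_ge0.
have ub : (dist_set x C <= (`|x - c0|)%:E)%E.
  by apply: ereal_inf_lbound; exists c0.
move: lb ub; case E: (dist_set x C) => [d0| |] //= lb ub.
exists d0; split => //.
move=> eta eta0.
have : (dist_set x C < (d0 + eta)%:E)%E by rewrite E lte_fin; lra.
by case/ereal_inf_lt => _ [c hc <-]; rewrite lte_fin => h; exists c.
Qed.

Theorem mainTheorem4 (R : realType) (H : completeNormedModType R)
    (ip : H -> H -> R) (f g : H -> R) (r : R) :
  hilbert_inner ip ->
  convex_fun f -> convex_fun g ->
  continuous f -> continuous g ->
  argmin f !=set0 ->
  0 < r ->
  forall x : H, (dist_set x (argmin f) <= r%:E)%E ->
  forall delta : R, 0 < delta ->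
  let U := [set y | (dist_set y (argmin f) <= r%:E)%E] in
  let S := pos_sup (fun y => slope ip g y - slope ip f y)%E U in
  let T := pos_sup (fun y => (g y - f y)%:E) (argmin f) in
  ((g x - f x)%:E <=
     (S + delta%:E) * dist_set x (argmin f)
     + (S * (delta^-1)%:E) * ((f x)%:E - fmin f)
     + T)%E.
Proof.
move=> hip cf cg contf contg [c0 hc0] r0 x hx delta de0.
cbv zeta.
set U := [set y | (dist_set y (argmin f) <= r%:E)%E].
set S := pos_sup _ U.
set T := pos_sup _ (argmin f).
set C := argmin f.
set fs := f c0.
have hfs : forall z, fs <= f z by exact: hc0.
have hfmin : fmin f = fs%:E.
  apply/eqP; rewrite eq_le; apply/andP; split.
    by apply: ereal_inf_lbound; exists c0.
  by apply: le_ereal_inf_tmp => _ [z _ <-]; rewrite lee_fin.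
have [d0 [hd0 d00 d0c hd]] := dist_fin C x c0 hc0.
have xU : U x by [].
have S0 : (0 <= S)%E.
  apply: (@le_trans _ _ (maxe (slope ip g x - slope ip f x) 0)%E).
    by rewrite le_max lexx orbT.
  by apply: ereal_sup_ubound; exists x.
have hSp : forall y, U y -> (maxe (slope ip g y - slope ip f y) 0 <= S)%E.
  by move=> y hy; apply: ereal_sup_ubound; exists y.
have T0 : (0 <= T)%E.
  apply: (@le_trans _ _ (maxe (g c0 - f c0)%:E 0)%E).
    by rewrite le_max lexx orbT.
  by apply: ereal_sup_ubound; exists c0.
have hTp : forall c, C c -> ((g c - f c)%:E <= T)%E.
  move=> c hc; apply: (@le_trans _ _ (maxe (g c - f c)%:E 0)%E).
    by rewrite le_max lexx.
  by apply: ereal_sup_ubound; exists c.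
rewrite hfmin hd0.
have hS' : forall Sr, S = Sr%:E -> forall y, (forall c, C c -> `|y - c| <= `|x - c|) ->
     forall u, subdiff ip f y u -> forall e, 0 < e ->
     exists v, subdiff ip g y v /\ `|v| <= `|u| + Sr + e.
  move=> Sr hSr y Py u hu e e0.
  have yU : U y by rewrite /U /=; apply: le_trans (dist_mono C x y Py) hx.
  have := hSp y yU; rewrite hSr ge_max => /andP[hle _].
  have sf0 : (0 <= slope ip f y)%E.
    by apply: le_ereal_inf_tmp => _ [c hc <-]; rewrite lee_fin normr_ge0.
  have sfu : (slope ip f y <= (`|u|)%:E)%E.
    by apply: ereal_inf_lbound; exists u => //; rewrite sub0r normrN.
  move: sf0 sfu hle; case: (slope ip f y) => [sf| |] // sf0 sfu hle.
  rewrite lee_fin in sfu.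
  rewrite leeBlDr // in hle.
  have : (slope ip g y < (Sr + sf + e)%:E)%E.
    by apply: le_lt_trans hle _; rewrite -EFinD lte_fin; lra.
  case/ereal_inf_lt => _ [v hv <-]; rewrite lte_fin sub0r normrN => hv'.
  by exists v; split => //; lra.
clearbody S T; clear hSp.
move: S0 hS'; case: S => [Sr| |] // S0 hS'.
- move: T0 hTp; case: T => [Tr| |] // T0 hTp.
  + rewrite lee_fin in S0.
    have hT : forall c, C c -> g c - f c <= Tr by move=> c hc; rewrite -lee_fin hTp.
    have := core f g x Tr Sr delta d0 fs hip cf contf contg hfs hT (hS' Sr erefl) hd d00 S0 de0.
    by rewrite -lee_fin.
  + rewrite addey ?leey //.
- have pos : forall X : \bar R, (0 <= X)%E -> (X != -oo)%E.
    by move=> X X0; apply/negP => /eqP hX; move: X0; rewrite hX leeNy_eq.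
  have dd : (0 <= (+oo + delta%:E) * d0%:E)%E by apply: mule_ge0 => //; rewrite lee_fin.
  have fxs : (0 <= (f x)%:E - fs%:E)%E by rewrite -EFinB lee_fin subr_ge0.
  have di : (0 < (delta^-1)%:E)%E by rewrite lte_fin invr_gt0.
  move: T0 hTp; case: T => [Tr| |] // T0 hTp.
  + have [fe|fl] := eqVneq (f x) fs.
    * have xC : C x by move=> z; rewrite fe.
      have dz : d0 = 0.
        apply/eqP; rewrite eq_le d00 andbT -lee_fin -hd0.
        by apply: ereal_inf_lbound; exists x => //; rewrite subrr normr0.
      move: (hTp x xC); rewrite dz fe subee // !mule0 !add0e; exact.
    * have fl' : (0 < (f x)%:E - fs%:E)%E.
        by rewrite -EFinB lte_fin subr_gt0 lt_neqAle eq_sym fl hfs.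
      rewrite (gt0_mulye di) (gt0_mulye fl') addey ?addye ?leey //; exact: pos.
  + rewrite addey ?leey //; apply: pos; apply: adde_ge0 => //.
    by apply: mule_ge0 => //; rewrite gt0_mulye.
Qed.
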